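(* Let $q=2^r$ with $r\ge 3$. Let $f\in\mathbb F_q[X,Y]$ be a local permutation polynomial whose permutation polynomial tuple consists of the $q$ elements of the group $G_2=\{b^ja^i:0\le j\le \frac q2-1,\ 0\le i\le 1\}$ (in some order), where $a$ and $b$ are as defined below. Then $f$ has a companion.
   Context: The elements of $\mathbb F_q$ are enumerated as $\mathbb F_q=\{c_0,\dots,c_{q-1}\}$; $\mathfrak S_q$ is the symmetric group of permutations of $\mathbb F_q$, composed right to left, written in cycle notation. $a=(c_0,c_1)(c_2,c_3)\cdots(c_{q-2},c_{q-1})$ and $b=(c_{\frac q2-2},c_{\frac q2-4},\dots,c_2,c_0,c_{\frac q2},c_{\frac q2+2},\dots,c_{q-4},c_{q-2})\,(c_1,c_3,\dots,c_{\frac q2-1},c_{q-1},c_{q-3},\dots,c_{\frac q2+1})$. ($G_2$ is a subgroup of $\mathfrak S_q$ of order $q$ whose non-identity elements have no fixed points.) Every function $\mathbb F_q^2\to\mathbb F_q$ is identified with the unique polynomial in $\mathbb F_q[X,Y]$ of degree $<q$ in each variable representing it. $f$ is a local permutation polynomial (LPP) if $x\mapsto f(x,y_0)$ and $y\mapsto f(x_0,y)$ are permutations of $\mathbb F_q$ for all $x_0,y_0$. A permutation polynomial tuple is $(\beta_0,\dots,\beta_{q-1})\in\mathfrak S_q^q$ such that $\beta_i^{-1}\beta_j$ has no fixed point whenever $i\ne j$; LPPs $f$ correspond bijectively to such tuples via $f(x,\beta_i(x))=c_i$ for all $x$ and all $i$. Two LPPs $f,g$ are orthogonal (companions) if for every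 $(u,v)\in\mathbb F_q^2$ the system $f(X,Y)=u$, $g(X,Y)=v$ has exactly one solution in $\mathbb F_q^2$; a companion of $f$ is an LPP orthogonal to $f$. *)

(* Defs.v *)
From mathcomp Require Import all_boot all_order all_algebra all_fingroup.
Set Implicit Arguments.
Unset Strict Implicit.
Unset Printing Implicit Defensive.

(* Index-level description of the permutations a and b of the paper, where
   F_q = {c_0, ..., c_{q-1}}:  a (c_i) = c_(a_idx i),  b (c_i) = c_(b_idx q i). *)

(* a = (c_0,c_1)(c_2,c_3)...(c_{q-2},c_{q-1}) *)
Definition a_idx (i : nat) : nat := if odd i then i.-1 else i.+1.

(* b = (c_{q/2-2}, c_{q/2-4}, ..., c_2, c_0, c_{q/2}, c_{q/2+2}, ..., c_{q-2})
       (c_1, c_3, ..., c_{q/2-1}, c_{q-1}, c_{q-3}, ..., c_{q/2+1}),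
   each cycle sending an entry to the next one and the last to the first. *)
Definition b_idx (q i : nat) : nat :=
  let h := q./2 in
  if ~~ odd i then
    (if i == 0 then h
     else if i < h then i - 2
     else if i == q - 2 then h - 2
     else i + 2)
  else
    (if i == h - 1 then q - 1
     else if i < h then i + 2
     else if i == h + 1 then 1
     else i - 2).

(* f : F_q^2 -> F_q (identified with its reduced polynomial) is a local
   permutation polynomial. *)
Definition is_LPP (F : finFieldType) (f : F -> F -> F) : Prop :=
  (forall y0 : F, bijective (fun x => f x y0)) /\
  (forall x0 : F, bijective (fun y => f x0 y)).

(* (beta_0, ..., beta_{q-1}) is a permutation polynomial tuple:
   beta_i^{-1} beta_j (apply beta_j first) has no fixed point for i <> j. *)
Definition is_ppt (F : finFieldType) (q : nat) (beta : 'I_q -> {perm F}) : Prop :=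
  forall i j : 'I_q, i != j -> forall x : F, ((beta j * (beta i)^-1)%g x != x).

Definition ppt_of (F : finFieldType) (q : nat) (c : 'I_q -> F)
  (f : F -> F -> F) (beta : 'I_q -> {perm F}) : Prop :=
  is_ppt beta /\ forall (i : 'I_q) (x : F), f x (beta i x) = c i.

Definition orthogonal_polys (F : finFieldType) (f g : F -> F -> F) : Prop :=
  forall u v : F, exists! p : F * F, f p.1 p.2 = u /\ g p.1 p.2 = v.

(* G_2 = { b^j a^i : 0 <= j <= q/2 - 1, 0 <= i <= 1 }, composition right to left;
   in mathcomp (s * t) x = t (s x), so b^j a^i is (a ^+ i * b ^+ j)%g. *)
Definition G2 (F : finFieldType) (q : nat) (a b : {perm F}) : {set {perm F}} :=
  [set (a ^+ i * b ^+ j)%g | j : 'I_(q./2), i : 'I_2].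

(* Main.v *)
Require Import Defs.
From mathcomp Require Import all_boot all_order all_algebra all_fingroup.
From mathcomp Require Import zify ring.
Set Warnings "-all".
Module NatPart.
Set Warnings "-all".

Definition Eidx (n k : nat) : nat :=
  if k == 0 then 0 else if k <= n then 2*n + 2*(k-1) else 2*(2*n-k).
Definition Pidx (n k : nat) (e : bool) : nat := Eidx n k + e.

Lemma Pidx_lt n k e : k < 2*n -> Pidx n k e < 4*n.
Proof. rewrite /Pidx /Eidx; case: e; repeat case: ifP; lia. Qed.

Lemma Pidx_inj n k k' e e' : k < 2*n -> k' < 2*n ->
  Pidx n k e = Pidx n k' e' -> k = k' /\ e = e'.
Proof. rewrite /Pidx /Eidx; case: e; case: e'; repeat case: ifP; lia. Qed.

Lemma a_step n k e : a_idx (Pidx n k e) = Pidx n k (~~e).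
Proof. rewrite /a_idx /Pidx /Eidx; case: e; repeat case: ifP; lia. Qed.


Lemma half4 n : (4*n)./2 = 2*n.
Proof. by rewrite (_ : 4*n = (2*n).*2) ?doubleK // -mul2n; lia. Qed.

Lemma b_stepF n k : 2 <= n -> k < 2*n ->
  b_idx (4*n) (Pidx n k false) = Pidx n (if k.+1 == 2*n then 0 else k.+1) false.
Proof.
move=> n2 kn. rewrite /b_idx half4 /Pidx /Eidx /=.
repeat case: ifP => //=; lia.
Qed.

Lemma b_stepT n k : 2 <= n -> k < 2*n ->
  b_idx (4*n) (Pidx n k true) = Pidx n (if k == 0 then 2*n-1 else k-1) true.
Proof.
move=> n2 kn. rewrite /b_idx half4 /Pidx /Eidx /=.
repeat case: ifP => //=; lia.
Qed.

Definition sgn (n k : nat) (e : bool) : nat * bool :=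
  if e then (if k == 0 then 1 else if k == 1 then 0 else (2*n).+1 - k, (0 < k) && (k <= n))
  else (if k == 0 then 0 else 2*n - k, n <= k).

Definition Lval (n k : nat) (e : bool) : nat :=
  if e then (if k == 0 then 1 else if k <= n then 2*k - 1 else 4*n+1-2*k)
  else (if k < n then (if k == 0 then 0 else 2*n - 2*k) else 2*k - 2*n).


Lemma sgn_lt n k e : 2 <= n -> k < 2*n -> (sgn n k e).1 < 2*n.
Proof. rewrite /sgn; case: e; repeat case: ifP => //=; lia. Qed.

Lemma sgn_inj n k k' e e' : 2 <= n -> k < 2*n -> k' < 2*n ->
  sgn n k e = sgn n k' e' -> k = k' /\ e = e'.
Proof.
rewrite /sgn => n2 kn kn'; case: e; case: e'; repeat case: ifP => //=;
  move=> *; repeat match goal with H : (_, _) = (_, _) |- _ => case: H => * end; lia.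
Qed.

Lemma Lval_lt n k e : 2 <= n -> k < 2*n -> Lval n k e < 2*n.
Proof. rewrite /Lval; case: e; repeat case: ifP => //=; lia. Qed.

Lemma lam_inj n k k' e e' : 2 <= n -> k < 2*n -> k' < 2*n ->
  e (+) (sgn n k e).2 = e' (+) (sgn n k' e').2 -> Lval n k e = Lval n k' e' ->
  k = k' /\ e = e'.
Proof.
rewrite /sgn /Lval => n2 kn kn'; case: e; case: e'; repeat case: ifP => //=; lia.
Qed.

Lemma sgn_cast n k e : 2 <= n -> k < 2*n ->
  exists x, if (sgn n k e).2 then (sgn n k e).1 + Lval n k e = k + x * (2*n)
            else (sgn n k e).1 + x * (2*n) = k + Lval n k e.
Proof.
rewrite /sgn /Lval => n2 kn; case: e; repeat case: ifP => //= *;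
  first [exists 0; repeat case: ifP => //=; lia | exists 1; repeat case: ifP => //=; lia].
Qed.

End NatPart.
Import NatPart.

Module ZhPart.
Set Warnings "-all".
Set Implicit Arguments. Unset Strict Implicit.
Import GRing.Theory.
Local Open Scope ring_scope.

Definition sg (n : nat) (e : bool) : 'Z_(2*n) := (-1) ^+ e.

Definition rho (n : nat) (eps : bool) (t : 'Z_(2*n)) (z : 'Z_(2*n) * bool) : 'Z_(2*n) * bool :=
  (z.1 + sg n (z.2 (+) eps) * t, z.2 (+) eps).

Definition sigc (n : nat) (z : 'Z_(2*n) * bool) : 'Z_(2*n) * bool :=
  (((sgn n (val z.1) z.2).1)%:R, (sgn n (val z.1) z.2).2).

Lemma sg_add n a b : sg n (a (+) b) = sg n a * sg n b.
Proof. by case: a; case: b; rewrite /sg /= ?expr0 ?expr1 ?mulr1 ?mul1r ?mulrNN ?mulr1. Qed.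

Lemma sg2 n a : sg n a * sg n a = 1.
Proof. by case: a; rewrite /sg /= ?expr0 ?expr1 ?mulr1 ?mulrNN ?mulr1. Qed.

Lemma rho_comp n eps eps' t t' z :
  rho eps t z = rho (eps (+) eps') (t - sg n (eps (+) eps') * t') (rho eps' t' z).
Proof.
rewrite /rho /=; congr pair; last by case: eps; case: eps'; case: z.2.
case: z.2; case: eps; case: eps'; rewrite /sg /= ?expr0 ?expr1; ring.
Qed.

Lemma rho_inj n eps t z z' : rho (n:=n) eps t z = rho eps t z' -> z = z'.
Proof.
case: z z' => k e [k' e']; rewrite /rho; move=> E.
have E1 := congr1 fst E.
have E2 := congr1 snd E.
cbn [fst snd] in E1; cbn [fst snd] in E2.
have ee : e = e' by move: E2 => /(congr1 (addb ^~ eps)); rewrite -!addbA addbb !addbF.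
move: E1; rewrite ee => E1; by congr pair; exact: (addIr _ E1).
Qed.

Lemma valZ_lt n (k : 'Z_(2*n)) : (2 <= n)%N -> (val k < 2*n)%N.
Proof. move=> n2; apply: leq_trans (ltn_ord k) _; rewrite Zp_cast //; lia. Qed.

Lemma hR0 n : (2 <= n)%N -> ((2*n)%:R : 'Z_(2*n)) = 0.
Proof. by move=> n2; rewrite -Zp_nat_mod ?modnn //; lia. Qed.

Lemma natZ_inj n (x y : nat) : (2 <= n)%N -> (x < 2*n)%N -> (y < 2*n)%N ->
  (x%:R : 'Z_(2*n)) = y%:R -> x = y.
Proof.
move=> n2 xl yl E; have := congr1 (@nat_of_ord _) E; rewrite !val_Zp_nat; try lia.
by rewrite !modn_small.
Qed.

Lemma lam_of n d u (z : 'Z_(2*n) * bool) : (2 <= n)%N ->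
  sigc z = rho d u z ->
  d = z.2 (+) (sgn n (val z.1) z.2).2 /\ val u = Lval n (val z.1) z.2.
Proof.
move=> n2; case: z => k e; rewrite /sigc /rho; move=> E.
have E1 := congr1 fst E.
have E2 := congr1 snd E.
cbn [fst snd] in E1; cbn [fst snd] in E2.
split; first by rewrite E2 addKb.
have kl := valZ_lt k n2.
have [x Hx] := sgn_cast n (val k) e n2 kl.
have hh := hR0 n2.
rewrite -E2 in E1.
set m := (sgn n k e).1 in Hx E1. set f := (sgn n k e).2 in Hx E1.
set L := Lval n k e in Hx *.
have LL : (L < 2*n)%N by exact: Lval_lt n (val k) e n2 kl.
have uL : u = L%:R.
  move: Hx E1; case: f => Hx E1.
  - have := congr1 (fun y => (y%:R : 'Z_(2*n))) Hx; rewrite /= !natrD natrM hh mulr0 addr0 natr_Zp E1.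
    rewrite /sg /= expr1 mulN1r => H.
    transitivity (k - (k - u + L%:R) + L%:R); first ring.
    by rewrite H; ring.
  - have := congr1 (fun y => (y%:R : 'Z_(2*n))) Hx; rewrite /= !natrD natrM hh mulr0 addr0 natr_Zp E1.
    rewrite /sg /= expr0 mul1r => H.
    transitivity ((k + u) - k); first ring.
    by rewrite H; ring.
rewrite uL; transitivity (nat_of_ord (L%:R : 'Z_(2*n))) => //.
rewrite val_Zp_nat ?modn_small //; lia.
Qed.

Lemma sigc_inj n (z z' : 'Z_(2*n) * bool) : (2 <= n)%N -> sigc z = sigc z' -> z = z'.
Proof.
move=> n2; case: z z' => k e [k' e']; rewrite /sigc => E.
have E1 := congr1 fst E. have E2 := congr1 snd E.
cbn [fst snd] in E1; cbn [fst snd] in E2.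
have kl := valZ_lt k n2. have kl' := valZ_lt k' n2.
have := natZ_inj n2 (sgn_lt n _ e n2 kl) (sgn_lt n _ e' n2 kl') E1 => E1'.
have : sgn n (val k) e = sgn n (val k') e'.
  by move: E1' E2; case: (sgn n (val k) e) => ? ?; case: (sgn n (val k') e') => ? ? /= -> ->.
move/(sgn_inj n _ _ _ _ n2 kl kl') => [kk ->].
by congr pair; apply: val_inj.
Qed.

Lemma valS n (k : 'Z_(2*n)) : (2 <= n)%N ->
  val (k + 1) = if (val k).+1 == (2*n)%N then 0%N else (val k).+1.
Proof.
move=> n2; have kl := valZ_lt k n2.
rewrite -[k in k + 1]natr_Zp natr1.
transitivity (nat_of_ord (((val k).+1)%:R : 'Z_(2*n))) => //.
rewrite val_Zp_nat; last lia.
case: eqP => [->|ne]; first by rewrite modnn.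
rewrite modn_small //; lia.
Qed.

Lemma valP1 n (k : 'Z_(2*n)) : (2 <= n)%N ->
  val (k - 1) = if val k == 0%N then (2*n - 1)%N else (val k - 1)%N.
Proof.
move=> n2; have kl := valZ_lt k n2.
have m1 : ((2*n - 1)%N%:R : 'Z_(2*n)) = -1.
  apply/eqP; rewrite -addr_eq0 natr1 (_ : (2*n - 1).+1 = 2*n)%N; last lia.
  by rewrite hR0.
rewrite -m1 -[k in k + _]natr_Zp -natrD.
transitivity (nat_of_ord (((val k + (2*n-1))%N)%:R : 'Z_(2*n))) => //.
rewrite val_Zp_nat; last lia.
case: eqP => [->|ne]; first by rewrite add0n modn_small //; lia.
rewrite (_ : (val k + (2*n-1) = (val k - 1) + 2*n)%N); last lia.
rewrite modnDr modn_small //; lia.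
Qed.

End ZhPart.
Import ZhPart.

Module AbsPart.
Set Warnings "-all".
Set Implicit Arguments. Unset Strict Implicit.

Lemma ppt_cover (F : finFieldType) (q : nat) (beta : 'I_q -> {perm F}) :
  #|F| = q -> is_ppt beta -> forall x w, exists i, beta i x = w.
Proof.
move=> cF pp x w.
have inj : injective (fun i => beta i x).
  move=> i j /= E; apply/eqP; apply/negPn/negP => ij.
  have := pp _ _ ij x; rewrite permM -E -permM mulgV perm1 eqxx //.
have := @inj_card_onto _ _ _ inj; rewrite card_ord cF leqnn => /(_ isT w) /codomP [i ->].
by exists i.
Qed.

Lemma companion_abs (F : finFieldType) (q : nat) (c : 'I_q -> F) (f : F -> F -> F)
  (beta : 'I_q -> {perm F}) (sigma : {perm F}) :
  #|F| = q -> bijective c -> is_LPP f -> ppt_of c f beta ->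
  (forall i k x x', beta i x = sigma (beta k x) -> beta i x' = sigma (beta k x') -> x = x') ->
  exists g : F -> F -> F, is_LPP g /\ orthogonal_polys f g.
Proof.
move=> cF [ci cK ciK] [LP1 LP2] [pp fb] U.
have cinj : injective c by exact: can_inj cK.
have cov := ppt_cover cF pp.
have fval : forall x y i, f x y = c i -> y = beta i x.
  move=> x y i E; have [j Ej] := cov x y; rewrite -Ej in E *.
  by rewrite fb in E; rewrite (cinj _ _ E).
exists (fun x y => f x ((sigma^-1)%g y)); split.
  split=> [y0|x0]; first exact: LP1.
  have b1 : bijective (fun y => (sigma^-1)%g y) by apply: injF_bij; exact: perm_inj.
  exact: bij_comp (LP2 x0) b1.
move=> u v.
have covb : forall x w, exists i, beta i x == w by move=> x w; have [i E] := cov x w; exists i; apply/eqP.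
pose phi k x := xchoose (covb x (sigma (beta k x))).
have phiP : forall k x, beta (phi k x) x = sigma (beta k x) by move=> k0 x0; apply/eqP; exact: (xchooseP (covb x0 (sigma (beta k0 x0)))).
have [k Ek] : exists k, c k = v by exists (ci v); rewrite ciK.
have [i Ei] : exists i, c i = u by exists (ci u); rewrite ciK.
have phinj : injective (phi k).
  by move=> x x' E; apply: (U (phi k x) k x x'); [exact: phiP | rewrite E; exact: phiP].
have := @inj_card_onto _ _ _ phinj; rewrite card_ord cF leqnn => /(_ isT i) /codomP [x Ex].
exists (x, beta i x); split.
  by split; rewrite /= ?fb ?Ei // Ex phiP permK fb.
move=> [x' y'] /= [E1 E2].
rewrite -Ei in E1; rewrite -Ek in E2.
have Y1 := fval _ _ _ E1. have Y2 := fval _ _ _ E2.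
have Hx : beta i x = sigma (beta k x) by rewrite Ex phiP.
have Hx' : beta i x' = sigma (beta k x') by rewrite -Y1 -Y2 permKV.
have xx := U i k x x' Hx Hx'.
by rewrite -xx Y1 xx.
Qed.

End AbsPart.
Import AbsPart.

Set Warnings "-all".
Import GRing.Theory.

Theorem theorem4p9 (F : finFieldType) (r : nat) (c : 'I_(2 ^ r) -> F)
  (a b : {perm F}) (f : F -> F -> F) (beta : 'I_(2 ^ r) -> {perm F}) :
  3 <= r ->
  #|F| = 2 ^ r ->
  bijective c ->
  (forall i j : 'I_(2 ^ r), nat_of_ord j = a_idx i -> a (c i) = c j) ->
  (forall i j : 'I_(2 ^ r), nat_of_ord j = b_idx (2 ^ r) i -> b (c i) = c j) ->
  is_LPP f ->
  ppt_of c f beta ->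
  [set beta i | i : 'I_(2 ^ r)] = G2 (2 ^ r) a b ->
  exists g : F -> F -> F, is_LPP g /\ orthogonal_polys f g.
Proof.
move=> r3 cF cbij HA HB LP ppt HG.
pose n := (2 ^ (r - 2))%N.
have Hq : (2 ^ r = 4 * n)%N by rewrite /n -(expnD 2 2) subnKC //; lia.
have n2 : (2 <= n)%N.
  by rewrite /n (_ : r - 2 = (r - 3).+1)%N ?expnS ?expn_gt0 //; try lia; rewrite leq_pmul2l ?expn_gt0.
have q0 : (0 < 2 ^ r)%N by rewrite expn_gt0.
pose d : 'I_(2 ^ r) := Ordinal q0.
pose cN (i : nat) := c (insubd d i).
have valN : forall i, (i < 2 ^ r)%N -> val (insubd d i) = i.
  by move=> i il; rewrite val_insubd il.
have cinj : injective c by exact: bij_inj.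
have cN_inj : forall x y, (x < 2 ^ r)%N -> (y < 2 ^ r)%N -> cN x = cN y -> x = y.
  by move=> x y xl yl /cinj /(congr1 val); rewrite !valN.
have cN_a : forall i, (i < 2 ^ r)%N -> (a_idx i < 2 ^ r)%N -> a (cN i) = cN (a_idx i).
  by move=> i il al; apply: HA; rewrite !valN.
have cN_b : forall i, (i < 2 ^ r)%N -> (b_idx (2 ^ r) i < 2 ^ r)%N -> b (cN i) = cN (b_idx (2 ^ r) i).
  by move=> i il al; apply: HB; rewrite !valN.
pose P (z : 'Z_(2*n) * bool) := cN (Pidx n (val z.1) z.2).
have Plt : forall (k : 'Z_(2*n)) e, (Pidx n (val k) e < 2 ^ r)%N.
  by move=> k e; rewrite Hq; apply: Pidx_lt; exact: valZ_lt.
have aP : forall k e, a (P (k, e)) = P (k, ~~ e).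
  by move=> k e; rewrite /P /= cN_a ?a_step //; apply: Plt.
have bPF : forall k, b (P (k, false)) = P ((k + 1)%R, false).
  move=> k; have kl := valZ_lt k n2.
  have E : b_idx (2^r) (Pidx n (val k) false) = Pidx n (val (k+1)%R) false by rewrite Hq b_stepF // valS.
  by rewrite /P /= cN_b ?E //; apply: Plt.
have bPT : forall k, b (P (k, true)) = P ((k - 1)%R, true).
  move=> k; have kl := valZ_lt k n2.
  have E : b_idx (2^r) (Pidx n (val k) true) = Pidx n (val (k-1)%R) true by rewrite Hq b_stepT // valP1.
  by rewrite /P /= cN_b ?E //; apply: Plt.
have bexp : forall (j : nat) k e, (b ^+ j)%g (P (k, e)) = P ((k + sg n e * j%:R)%R, e).
  elim=> [|j IH] k e.
    by rewrite expg0 perm1 mulr0 addr0.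
  rewrite expgSr permM IH; case: e.
    by rewrite bPT; congr (P (_, _)); rewrite /sg /= expr1 -natr1; ring.
  by rewrite bPF; congr (P (_, _)); rewrite /sg /= expr0 -natr1; ring.
have aexp : forall (i : 'I_2) k e, (a ^+ i)%g (P (k, e)) = P (k, e (+) (nat_of_ord i == 1%N)).
  move=> i k e; have : (nat_of_ord i == 0%N) || (nat_of_ord i == 1%N) by case: i => [[|[|m]]].
  case/orP => /eqP vi; rewrite vi.
    by rewrite expg0 perm1 (_ : (0 == 1)%N = false) // addbF.
  by rewrite expg1 aP (_ : (1 == 1)%N = true) // addbT.
have rhoform : forall i0, exists eps t, forall z, beta i0 (P z) = P (rho eps t z).
  move=> i0; have : beta i0 \in G2 (2 ^ r) a b by rewrite -HG; apply: imset_f.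
  case/imset2P => j i jin iin E.
  exists (nat_of_ord i == 1%N), ((nat_of_ord j)%:R)%R => -[k e].
  by rewrite E permM aexp bexp.
have Pinj : forall z z', P z = P z' -> z = z'.
  move=> [k e] [k' e'] /cN_inj; rewrite !Plt => /(_ isT isT) /(Pidx_inj _ _ _ _ _ (valZ_lt k n2) (valZ_lt k' n2)) /=.
  by case=> /val_inj -> ->.
have Psurj : forall x, exists z, P z == x.
  move=> x.
  have : #|F| <= #|{: 'Z_(2*n) * bool}|.
    by rewrite card_prod card_bool card_ord Zp_cast ?cF ?Hq; lia.
  move=> cle; have := @inj_card_onto _ _ _ Pinj cle x; case/codomP => z ->.
  by exists z.
pose coord x := xchoose (Psurj x).
have Pcoord : forall x, P (coord x) = x by move=> x; apply/eqP; exact: (xchooseP (Psurj x)).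
have coordP : forall z, coord (P z) = z by move=> z; apply: Pinj; rewrite Pcoord.
pose sigf x := P (sigc (coord x)).
have sig_inj : injective sigf.
  move=> x y /Pinj /(sigc_inj n2) E.
  by rewrite -(Pcoord x) -(Pcoord y) E.
pose sigma := perm sig_inj.
have sigmaP : forall z, sigma (P z) = P (sigc z) by move=> z; rewrite permE /sigf coordP.
apply: (companion_abs (sigma := sigma) cF cbij LP ppt).
move=> i k x x' H H'.
have [eps [t Hi]] := rhoform i.
have [eps' [t' Hk]] := rhoform k.
have [z /eqP Hz] := Psurj x. have [z' /eqP Hz'] := Psurj x'.
subst x x'.
move: H H'; rewrite !Hi !Hk !sigmaP => /Pinj H /Pinj H'.
rewrite (rho_comp eps eps' t t') in H.
rewrite (rho_comp eps eps' t t') in H'.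
have [d1 u1] := lam_of n2 (esym H).
have [d2 u2] := lam_of n2 (esym H').
set w := rho eps' t' z in H d1 u1.
set w' := rho eps' t' z' in H' d2 u2.
have := lam_inj n (val w.1) (val w'.1) w.2 w'.2 n2 (valZ_lt _ n2) (valZ_lt _ n2).
rewrite -d1 -d2 -u1 -u2 => /(_ erefl erefl) [e1 e2].
have ww : w = w' by move: e1 e2; case: (w) => ? ?; case: (w') => ? ? /= /val_inj -> ->.
by rewrite (rho_inj ww).
Qed.
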